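(* Let $G$ be a planar PCC graph and let $\sigma,\sigma',\kappa$ be faces with $|\sigma|,|\sigma'|\ge 20$ and $|\kappa|\le 6$. Let $e,e'$ be edges on the boundary of $\kappa$ such that $e$ lies on the boundary of $\sigma$ and $e'$ lies on the boundary of $\sigma'$. Then $\sigma=\sigma'$ and $e=e'$.
   Context: $G$ is a finite simple connected graph 2-cell embedded in the sphere; $|\sigma|$ denotes the length of the boundary walk of a face $\sigma$; for a vertex $v$, $F(v)$ is the multiset of faces incident to $v$ (one per corner) and $K(v)=1-\frac{\deg(v)}{2}+\sum_{\sigma\in F(v)}\frac1{|\sigma|}$. A prism (resp. antiprism) of order $N$ is the planar graph with $2N$ vertices, two $N$-faces and $N$ quadrilaterals (resp. $2N$ triangles), each vertex incident to two quadrilaterals and one $N$-face (resp. three triangles and one $N$-face). A planar PCC graph is such a $G$ with $K(v)>0$, $\deg(v)\ge3$ for all $v$, not a prism or antiprism. *)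

(* Defs.v *)
(* Planar maps encoded as combinatorial maps (rotation systems). *)
From HB Require Import structures.
From mathcomp Require Import all_boot all_order all_algebra.
Set Implicit Arguments. Unset Strict Implicit. Unset Printing Implicit Defensive.
Import Order.TTheory GRing.Theory Num.Theory.

(* A map on the finite set of darts T:
   - [a] : edge involution (fixed-point free), a dart d and [a d] are the two
     halves of one edge;
   - [n] : vertex rotation (a permutation); vertices = orbits of [n];
   - faces = orbits of the face permutation [fperm a n := n \o a]:
     from dart d (at vertex u, pointing to v) go to [a d] (at v) and turn. *)

Section Maps.
Variables (T : finType) (a n : T -> T).

Definition fperm : T -> T := fun d => n (a d).

Definition deg (v : T) : nat := order n v.
Definition flen (s : T) : nat := order fperm s.

Definition nvert := fcard n predT.
Definition nedge := fcard a predT.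
Definition nface := fcard fperm predT.

Definition is_map : Prop :=
  [/\ injective n, cancel a a & forall d, a d != d].

Definition map_connected : Prop :=
  forall x y, connect [rel u w | (w == a u) || (w == n u)] x y.

(* 2-cell embedding in the sphere: Euler characteristic 2 *)
Definition genus0 : Prop := (nvert + nface = nedge + 2)%N.

(* simple graph: no loops, no multiple edges *)
Definition simple_map : Prop :=
  (forall d, ~~ fconnect n d (a d)) /\
  (forall d d', fconnect n d d' -> fconnect n (a d) (a d') -> d = d').

Definition curvature (v : T) : rat :=
  (1 - (deg v)%:R / 2 + \sum_(d | fconnect n v d) ((flen d)%:R)^-1)%R.

Definition ncorners (v s : T) : nat :=
  #|[pred d | fconnect n v d & fconnect fperm s d]|.

Definition is_prism (N : nat) : Prop :=
  [/\ (3 <= N)%N, nvert = (2 * N)%N, nface = N.+2 &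
   exists f1 f2, [/\ ~~ fconnect fperm f1 f2, flen f1 = N, flen f2 = N,
     (forall d, ~~ fconnect fperm f1 d -> ~~ fconnect fperm f2 d -> flen d = 4%N) &
     (forall v, deg v = 3%N /\ (ncorners v f1 + ncorners v f2 = 1)%N)]].

Definition is_antiprism (N : nat) : Prop :=
  [/\ (3 <= N)%N, nvert = (2 * N)%N, nface = (2 * N).+2 &
   exists f1 f2, [/\ ~~ fconnect fperm f1 f2, flen f1 = N, flen f2 = N,
     (forall d, ~~ fconnect fperm f1 d -> ~~ fconnect fperm f2 d -> flen d = 3%N) &
     (forall v, deg v = 4%N /\ (ncorners v f1 + ncorners v f2 = 1)%N)]].

Definition planar_PCC : Prop :=
  [/\ is_map, map_connected, genus0 & simple_map] /\
  [/\ forall v, (0 < curvature v)%R,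
      forall v, (3 <= deg v)%N &
      forall N, ~ is_prism N /\ ~ is_antiprism N].

Definition edge_on_face (d s : T) : bool :=
  fconnect fperm s d || fconnect fperm s (a d).

End Maps.

(* Main.v *)
Require Import Defs.
From HB Require Import structures.
From mathcomp Require Import all_boot all_order all_algebra.
From mathcomp Require Import ring lra zify.
Set Implicit Arguments. Unset Strict Implicit. Unset Printing Implicit Defensive.
Import Order.TTheory GRing.Theory Num.Theory.

Section Gen.
Variable T : finType.

Lemma iter_period (g : T -> T) x p i : iter p g x = x -> iter i g x = iter (i %% p) g x.
Proof.
move=> Hp; rewrite {1}(divn_eq i p) addnC iterD.
suff -> : iter (i %/ p * p) g x = x by [].
elim: (i %/ p) => [|q IH] //=; by rewrite mulSn iterD IH Hp.
Qed.

Lemma order_le_iter (g : T -> T) x p : 0 < p -> iter p g x = x -> order g x <= p.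
Proof.
move=> p0 Hp; rewrite /order.
apply: (@leq_trans (size (traject g x p))); last by rewrite size_traject.
apply: leq_trans (card_size _).
apply: subset_leq_card; apply/subsetP => y; rewrite inE => /connectP [q Hq ->].
apply/trajectP; exists ((size q) %% p); first by rewrite ltn_mod.
rewrite -(iter_period _ Hp).
by case/fpathP: Hq => m ->; rewrite last_traject size_traject.
Qed.

Lemma fconnect_order (g : T -> T) (Hg : injective g) x y :
  fconnect g x y -> order g x = order g y.
Proof.
move=> Hxy; rewrite /order; apply: eq_card => z.
by rewrite !inE (same_connect (fconnect_sym Hg) Hxy).
Qed.

Lemma sum_orbit (g : T -> T) (Hg : injective g) v (F : T -> rat) :
  (\sum_(d | fconnect g v d) F d = \sum_(i < order g v) F (iter i g v))%R.
Proof.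
rewrite (eq_bigl (fun d => d \in orbit g v)); last by move=> d; rewrite fconnect_orbit.
rewrite -big_uniq ?orbit_uniq //= /orbit.
move: (order g v) => k; elim: k v => [|k IH] v; first by rewrite big_nil big_ord0.
by rewrite trajectS big_cons big_ord_recl IH /=; congr (_ + _)%R; apply: eq_bigr => i _; rewrite -iterSr.
Qed.

End Gen.
Section Map.
Variables (T : finType) (a n : T -> T).
Hypothesis Hn : injective n.
Hypothesis Ha : cancel a a.
Hypothesis Ha0 : forall d, a d != d.
Hypothesis Hloop : forall d, ~~ fconnect n d (a d).
Hypothesis Hmult : forall d d', fconnect n d d' -> fconnect n (a d) (a d') -> d = d'.
Hypothesis Hcurv : forall v, (0 < curvature a n v)%R.
Hypothesis Hdeg : forall v, 3 <= deg n v.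

Local Notation f := (fperm a n).
Local Notation flen := (flen a n).
Local Notation deg := (deg n).
Definition sv (x : T) : rat := ((flen x)%:R)^-1.
Local Notation big x := (20 <= flen x).

Lemma f_inj : injective f.
Proof. by move=> x y; rewrite /fperm => /Hn /(can_inj Ha). Qed.

Lemma fE x : f x = n (a x). Proof. by []. Qed.

Lemma n_sym x y : fconnect n x y = fconnect n y x.
Proof. exact: fconnect_sym. Qed.

Lemma flen_conn x y : fconnect f x y -> flen x = flen y.
Proof. exact: (fconnect_order f_inj). Qed.

Lemma flen_f x : flen (f x) = flen x.
Proof. by symmetry; apply: flen_conn; apply: fconnect1. Qed.

Lemma flen_iter i x : flen (iter i f x) = flen x.
Proof. by elim: i => //= i IH; rewrite flen_f. Qed.

Lemma deg_conn x y : fconnect n x y -> deg x = deg y.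
Proof. exact: (fconnect_order Hn). Qed.

Lemma deg_n x : deg (n x) = deg x.
Proof. by symmetry; apply: deg_conn; apply: fconnect1. Qed.

Lemma iter_deg x : iter (deg x) n x = x.
Proof. exact: iter_order. Qed.

Lemma n1_neq x : n x != x.
Proof.
apply/eqP => H; have H2 := Hdeg x; have H1 := @order_le_iter _ n x 1 isT H.
rewrite /deg in H2; lia.
Qed.

Lemma n2_neq x : n (n x) != x.
Proof.
apply/eqP => H; have H2 := Hdeg x; have H1 := @order_le_iter _ n x 2 isT H.
rewrite /deg in H2; lia.
Qed.

Lemma flen_ge3 x : 3 <= flen x.
Proof.
have H0 : 0 < flen x by apply: order_gt0.
case E1: (flen x == 1).
  have Hx : iter (flen x) f x = x by apply: iter_order; apply: f_inj.
  rewrite (eqP E1) /= fE in Hx.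
  have : fconnect n (a x) (n (a x)) by apply: fconnect1.
  rewrite Hx.
  by rewrite n_sym (negbTE (Hloop x)).
case E2: (flen x == 2).
  have Hx : iter (flen x) f x = x by apply: iter_order; apply: f_inj.
  rewrite (eqP E2) /= !fE in Hx.
  set y := n (a x) in Hx.
  have Hxy : x = a y.
    apply: Hmult.
      have : fconnect n (a y) (n (a y)) by apply: fconnect1.
      by rewrite Hx n_sym.
    by rewrite Ha; apply: fconnect1.
  have : n y = y by rewrite {2}/y Hxy Ha.
  by move/eqP; rewrite (negbTE (n1_neq y)).
by move: H0 E1 E2; case: (flen x) => [|[|[|]]].
Qed.

Lemma sv_pos x : (0 < sv x)%R.
Proof. by rewrite /sv invr_gt0 ltr0n; apply: leq_trans (flen_ge3 x). Qed.

Lemma sv_le3 x : (sv x <= 3%:R^-1)%R.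
Proof.
rewrite /sv lef_pV2 ?ler_nat ?flen_ge3 // posrE ltr0n //.
by apply: leq_trans (flen_ge3 x).
Qed.

Lemma sv_big x : big x -> (sv x <= 20%:R^-1)%R.
Proof.
move=> H; rewrite /sv lef_pV2 ?ler_nat // posrE ltr0n //.
by apply: leq_trans H.
Qed.

Lemma sv_lt q x : 0 < q -> (q%:R^-1 < sv x)%R -> flen x < q.
Proof.
move=> q0; rewrite /sv ltf_pV2 ?ltr_nat // posrE ltr0n //.
by apply: leq_trans (flen_ge3 x).
Qed.

Lemma sv_gt q x : 0 < q -> (sv x < q%:R^-1)%R -> q < flen x.
Proof.
move=> q0; rewrite /sv ltf_pV2 ?ltr_nat // posrE ltr0n //.
by apply: leq_trans (flen_ge3 x).
Qed.

Lemma sv_eq L x : flen x = L -> sv x = (L%:R^-1)%R.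
Proof. by rewrite /sv => ->. Qed.

Lemma vsum v : (0 < 1 - (deg v)%:R / 2 + \sum_(i < deg v) sv (iter i n v))%R.
Proof. by have := Hcurv v; rewrite /curvature (sum_orbit Hn). Qed.

Lemma V3 y : deg y = 3 -> n (n (n y)) = y /\ (2%:R^-1 < sv y + sv (n y) + sv (n (n y)))%R.
Proof.
move=> H; split; first by rewrite -[RHS](iter_deg y) H.
have := vsum y; rewrite H !big_ord_recl big_ord0 /=.
rewrite /bump /=. lra.
Qed.

Lemma V4 y : deg y = 4 -> n (n (n (n y))) = y /\
  (1 < sv y + sv (n y) + sv (n (n y)) + sv (n (n (n y))))%R.
Proof.
move=> H; split; first by rewrite -[RHS](iter_deg y) H.
have := vsum y; rewrite H !big_ord_recl big_ord0 /=.
rewrite /bump /=. lra.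
Qed.

Lemma V5 y : 5 <= deg y ->
  (3%:R / 2%:R < sv y + sv (n y) + sv (n (n y)) + sv (n (n (n y))) + sv (n (n (n (n y)))))%R.
Proof.
move=> H; have := vsum y; rewrite -(subnKC H) big_split_ord.
set r := deg y - 5.
have Ht : (\sum_(i < r) sv (iter (5 + i) n y) <= r%:R / 3%:R)%R.
  have -> : (r%:R / 3%:R = \sum_(i < r) (3%:R^-1 : rat))%R.
    by rewrite sumr_const card_ord -[RHS]mulr_natl.
  by apply: ler_sum => i _; apply: sv_le3.
move: Ht; set t := (\sum_(i < r) _)%R.
have r0 : (0 <= r%:R :> rat)%R by apply: ler0n.
rewrite !big_ord_recl big_ord0 /= /bump /= natrD; lra.
Qed.


Lemma sv_ge q x : 0 < q -> flen x <= q -> (q%:R^-1 <= sv x)%R.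
Proof.
move=> q0 H; rewrite /sv lef_pV2 ?ler_nat // posrE ltr0n //.
by apply: leq_trans (flen_ge3 x).
Qed.

Lemma degP y : [\/ deg y = 3, deg y = 4 | 5 <= deg y].
Proof.
have := Hdeg y; case: (deg y) => [|[|[|[|[|k]]]]] //= _.
- by apply: Or31.
- by apply: Or32.
- by apply: Or33.
Qed.

Lemma faE x : f (a (f x)) = n (f x).
Proof. by rewrite fE Ha. Qed.

Lemma flen_af x : flen (a (f x)) = flen (n (f x)).
Proof. by rewrite -flen_f faE. Qed.

Lemma big_nfa x : big (a x) -> big (n x).
Proof. by rewrite -flen_f fE Ha. Qed.

Ltac clrT := repeat match goal with H : @eq ?A _ _ |- _ =>
  lazymatch A with bool => fail | rat => fail | _ => clear H end end.
Ltac nlra := let H := fresh "H" in move=> H; exfalso; clrT; lra.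

Ltac b x := let h1 := fresh "hb" in let h2 := fresh "hb" in
  have h1 := sv_le3 x; have h2 := sv_pos x.

Lemma L1 x : flen x <= 6 -> big (a x) -> ~~ big (a (f x)).
Proof.
move=> Hk Hb; rewrite -ltnNge flen_af.
set y0 := a x in Hb.
have E1 : f x = n y0 by [].
rewrite E1; apply: (@sv_lt 20) => //.
have h1 := sv_big Hb.
have h2 : (6%:R^-1 <= sv (n y0))%R by apply: sv_ge; rewrite // -E1 flen_f.
b y0; b (n y0); b (n (n y0)); b (n (n (n y0))); b (n (n (n (n y0)))).
case: (degP y0) => [/V3 [_] | /V4 [_] | /V5]; lra.
Qed.


Lemma sv_le q x : 0 < q -> q <= flen x -> (sv x <= q%:R^-1)%R.
Proof.
move=> q0 H; rewrite /sv lef_pV2 ?ler_nat // posrE ltr0n //.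
by apply: leq_trans H.
Qed.

Lemma sv_3 x : (4%:R^-1 < sv x)%R -> flen x = 3.
Proof.
move/(@sv_lt 4 x isT) => H; have := flen_ge3 x; lia.
Qed.

Lemma iterf_len x : iter (flen x) f x = x.
Proof. exact: (iter_order f_inj). Qed.

Lemma tri_f x : flen x = 3 -> f (f (f x)) = x.
Proof. by move=> H; have := iterf_len x; rewrite H. Qed.

Lemma quad_f x : flen x = 4 -> f (f (f (f x))) = x.
Proof. by move=> H; have := iterf_len x; rewrite H. Qed.

Lemma a_inj : injective a. Proof. exact: (can_inj Ha). Qed.

Lemma L2 x : 4 < flen x -> flen x <= 6 -> big (a x) -> big (a (f (f x))) -> False.
Proof.
move=> Hk5 Hk6 Hb Hb2.
set y0 := a x in Hb.
have E1 : f x = n y0 by [].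
have h1 := sv_big Hb.
have h2 : (6%:R^-1 <= sv (n y0))%R by apply: sv_ge; rewrite // -E1 flen_f.
have h3 : (sv (n y0) <= 5%:R^-1)%R by apply: sv_le; rewrite // -E1 flen_f.
b y0; b (n y0); b (n (n y0)); b (n (n (n y0))); b (n (n (n (n y0)))).
have [Hc3 Hz] : (n (n (n y0)) = y0) /\ (flen (n (n y0)) = 3)%N.
  case: (degP y0) => [/V3 [H3 H] | /V4 [_] | /V5]; [ | nlra | nlra].
  by split => //; apply: sv_3; clear E1; lra.
set z := n (n y0) in Hc3 Hz.
set y1 := a (f x).
have Ee1 : n y1 = f (f x) by [].
have Hbe : big (n (f (f x))) by apply: big_nfa.
have g1 := sv_big Hbe.
have g2 : (6%:R^-1 <= sv (n y1))%R by apply: sv_ge; rewrite // Ee1 !flen_f.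
have g3 : (sv (n y1) <= 5%:R^-1)%R by apply: sv_le; rewrite // Ee1 !flen_f.
rewrite -Ee1 in g1.
b y1; b (n y1); b (n (n y1)); b (n (n (n y1))); b (n (n (n (n y1)))).
have Hc1 : n (n (n y1)) = y1.
  by case: (degP y1) => [/V3 [H3 H] | /V4 [_] | /V5]; [ | nlra | nlra].
have Hfy1 : f y1 = z by rewrite /y1 faE.
have Hffz : f (f z) = y1 by apply: f_inj; rewrite tri_f // Hfy1.
have Hbz : big (a z) by rewrite -flen_f fE Ha Hc3.
have Hafz : a (f z) = n (n y1) by apply: Hn; rewrite -fE Hffz Hc1.
have Hz6 : flen z <= 6 by rewrite Hz.
have := L1 Hz6 Hbz.
by rewrite Hafz Ee1 Hbe.
Qed.


Lemma Step e : flen e = 4 -> big (a e) -> big (a (f (f e))) ->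
  [/\ deg (a e) = 3, flen (n (n (a e))) = 4, f (a (n (n (a e)))) = a e
    & a (f (f (n (n (a e))))) = f (a (f (f e)))].
Proof.
move=> H4 Hb Hb2.
set y0 := a e in Hb *.
have E1 : f e = n y0 by [].
have h1 := sv_big Hb.
have h2 : (sv (n y0) = 4%:R^-1)%R by apply: sv_eq; rewrite -E1 flen_f.
b y0; b (n y0); b (n (n y0)); b (n (n (n y0))); b (n (n (n (n y0)))).
have [Hd Hc3 Hz] : [/\ deg y0 = 3, n (n (n y0)) = y0 & (flen (n (n y0)) < 5)%N].
  case: (degP y0) => [Hd | /V4 [_] | /V5]; [ | nlra | nlra].
  have [H3 H] := V3 Hd; split => //; apply: sv_lt => //; clrT; lra.
set z := n (n y0) in Hc3 Hz *.
set y1 := a (f e).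
have Ee1 : n y1 = f (f e) by [].
have Hbe : big (n (f (f e))) by apply: big_nfa.
have g1 := sv_big Hbe.
have g2 : (sv (n y1) = 4%:R^-1)%R by apply: sv_eq; rewrite Ee1 !flen_f.
rewrite -Ee1 in g1.
b y1; b (n y1); b (n (n y1)); b (n (n (n y1))); b (n (n (n (n y1)))).
have Hc1 : n (n (n y1)) = y1.
  by case: (degP y1) => [/V3 [H3 H] | /V4 [_] | /V5]; [ | nlra | nlra].
have Hfy1 : f y1 = z by rewrite /y1 faE.
set y := a (n (f (f e))).
have Hfy : f y = y1 by rewrite fE /y Ha -Ee1 Hc1.
have Hbz : big (a z) by rewrite -flen_f fE Ha Hc3.
have Hby : big (a y) by rewrite /y Ha.
have Hz3 := flen_ge3 z.
have Hz4 : flen z = 4.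
  case E3: (flen z == 3).
    have Hfz : f z = y by apply: f_inj; apply: f_inj; rewrite tri_f ?(eqP E3) // -Hfy1 -Hfy.
    have Hz6 : flen z <= 6 by rewrite (eqP E3).
    by have := L1 Hz6 Hbz; rewrite Hfz Hby.
  by move: E3 Hz Hz3; clear; lia.
have Hffz : f (f z) = y by apply: f_inj; apply: f_inj; rewrite quad_f // -Hfy1 -Hfy.
split => //; first by rewrite fE Ha Hc3.
by rewrite Hffz /y faE.
Qed.


Lemma BTB b0 : big b0 -> flen (n b0) = 3 -> big (n (n b0)) -> False.
Proof.
move=> H1 H2 H3.
have h1 := sv_big H1; have h3 := sv_big H3.
have h2 : (sv (n b0) = 3%:R^-1)%R by apply: sv_eq.
b b0; b (n b0); b (n (n b0)); b (n (n (n b0))); b (n (n (n (n b0)))).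
by case: (degP b0) => [/V3 [_] | /V4 [_] | /V5]; nlra.
Qed.

Lemma Hex6 x : flen x = 6 -> big (a x) -> big (a (f (f (f x)))) ->
  iter 3 f (a (f (f (f x)))) = a x \/ iter 4 f (a (f (f (f x)))) = a x.
Proof.
move=> H6 Hb Hb3.
set e1 := f x. set e2 := f e1. set e3 := f e2.
set y0 := a x in Hb *.
have E1 : e1 = n y0 by [].
have h1 := sv_big Hb.
have h2 : (sv (n y0) = 6%:R^-1)%R by apply: sv_eq; rewrite -E1 flen_f.
b y0; b (n y0); b (n (n y0)); b (n (n (n y0))); b (n (n (n (n y0)))).
have [Hc0 Hz1] : n (n (n y0)) = y0 /\ (flen (n (n y0)) = 3)%N.
  case: (degP y0) => [Hd | /V4 [_] | /V5]; [ | nlra | nlra].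
  have [H3 H] := V3 Hd; split => //; apply: sv_3; clrT; lra.
set z1 := n (n y0) in Hc0 Hz1.
clear hb hb0 hb1 hb2 hb3 hb4 hb5 hb6 hb7 hb8 h2.
set y2 := a e2.
have Ey2 : n y2 = e3 by [].
have Hbe3 : big (n e3) by apply: big_nfa.
have g1 := sv_big Hbe3.
have g2 : (sv (n y2) = 6%:R^-1)%R by apply: sv_eq; rewrite Ey2 /e3 /e2 /e1 !flen_f.
rewrite -Ey2 in g1.
b y2; b (n y2); b (n (n y2)); b (n (n (n y2))); b (n (n (n (n y2)))).
have [Hc2 Hy2] : n (n (n y2)) = y2 /\ (flen y2 = 3)%N.
  case: (degP y2) => [Hd | /V4 [_] | /V5]; [ | nlra | nlra].
  have [H3 H] := V3 Hd; split => //; apply: sv_3; clrT; lra.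
clear hb hb0 hb1 hb2 hb3 hb4 hb5 hb6 hb7 hb8 g1 g2.
rewrite Ey2 in Hc2.
set y1 := a e1.
have Hfy1 : f y1 = z1 by rewrite /y1 faE.
have Hy1 : flen y1 = 3 by rewrite -flen_f Hfy1.
have Hny1 : n y1 = e2 by [].
have Hne2 : n e2 = f y2 by rewrite /y2 fE Ha.
have Hffz1 : f (f z1) = y1 by rewrite -Hfy1 tri_f.
have Hafz1 : n (a (f z1)) = y1 by rewrite -fE.
set tz := a z1.
have Htz : f tz = y0 by rewrite fE /tz Ha.
have Hbtz : big tz by rewrite -flen_f Htz.
have Hntz : n tz = f z1 by [].
have Hfe2 : flen e2 = 6 by rewrite /e2 /e1 !flen_f.
have Hfne2 : flen (n e2) = 3 by rewrite Hne2 flen_f.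
have Hfz1 : flen (f z1) = 3 by rewrite flen_f.
have k1 : (sv y1 = 3%:R^-1)%R by apply: sv_eq.
have k2 : (sv (n y1) = 6%:R^-1)%R by apply: sv_eq; rewrite Hny1.
have k3 : (sv (n (n y1)) = 3%:R^-1)%R by apply: sv_eq; rewrite Hny1.
have k4 := sv_big Hbtz.
have k5 : (sv (n tz) = 3%:R^-1)%R by apply: sv_eq; rewrite Hntz.
have Hfa3 : f (a e3) = n e3 by rewrite fE Ha.
b (n (n (n y1))); b (n (n (n (n y1)))).
case: (degP y1) => [Hd | Hd | /V5]; last by nlra.
-
  have [Hc1 _] := V3 Hd; rewrite Hny1 in Hc1.
  have Hafz : a (f z1) = n e2 by apply: Hn; rewrite Hafz1 Hc1.
  have Hfne2' : f (n e2) = n (f z1) by rewrite fE -Hafz Ha.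
  have Htri2 : f (f (n e2)) = y2 by rewrite Hne2 tri_f.
  have Hanfz : a (n (f z1)) = n e3 by apply: Hn; rewrite Hc2 -fE -Hfne2' Htri2.
  have Hfne3 : f (n e3) = n (n (f z1)) by rewrite fE -Hanfz Ha.
  have k6 : (sv (n (n tz)) = 3%:R^-1)%R
    by apply: sv_eq; rewrite Hntz -Hfne2' flen_f.
  have Hbnn : big (n (n (n tz))) by rewrite Hntz -Hfne3 flen_f.
  have k7 := sv_big Hbnn.
  b (n (n (n (n tz)))).
  case: (degP tz) => [Hd' | /V4 [_] | /V5]; [ | nlra | nlra].
  have [Hct _] := V3 Hd'.
  left; rewrite /= Hfa3 Hfne3 -Hntz Hct Htz //.
-
  have [Hc1 Hs] := V4 Hd; rewrite Hny1 in Hc1 Hs.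
  set q := n (n e2) in Hc1 Hs.
  have Hq6 : flen q < 6 by apply: sv_lt => //; clrT; lra.
  have Hafz : a (f z1) = q by apply: Hn; rewrite Hafz1 Hc1.
  have Hfq : f q = n (f z1) by rewrite fE -Hafz Ha.
  have Htri2 : f (f (n e2)) = y2 by rewrite Hne2 tri_f.
  set r := a (n e2).
  have Hnr : n r = f (n e2) by [].
  have Hanr : a (n r) = n e3 by apply: Hn; rewrite Hc2 -fE Hnr Htri2.
  have Hnnr : n (n r) = f (n e3) by rewrite fE -Hanr Ha.
  have Hbnnr : big (n (n r)) by rewrite Hnnr flen_f.
  have Hfr : f r = q by rewrite fE /r Ha.
  have Hflr : flen r = flen q by rewrite -Hfr flen_f.
  have Hfnr : flen (n r) = 3 by rewrite Hnr flen_f.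
  have Hnntz : n (n tz) = f q by rewrite Hntz Hfq.
  have k6 : sv (n (n tz)) = sv q by rewrite Hnntz /sv flen_f.
  have k7 : sv r = sv q by rewrite /sv Hflr.
  have k8 : (sv (n r) = 3%:R^-1)%R by apply: sv_eq.
  have k9 := sv_big Hbnnr.
  b q; b (n (n (n tz))); b (n (n (n (n tz)))); b (n (n (n r))); b (n (n (n (n r)))).
  have [t3 | [t4a t4b t4c]] : (n (n (n tz)) = tz) \/
      [/\ flen q = 3, flen (n (n (n tz))) = 3 & n (n (n (n tz))) = tz].
    case: (degP tz) => [/V3 [H _] | Hd' | /V5]; [by left | | nlra].
    have [H Hs'] := V4 Hd'; right; split => //; apply: sv_3; clrT; lra.
  all: have [u3 | [u4a u4b u4c]] : (n (n (n r)) = r) \/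
      [/\ flen q = 3, flen (n (n (n r))) = 3 & n (n (n (n r))) = r]
    by case: (degP r) => [/V3 [H _] | Hd' | /V5];
      [by left | have [H Hs'] := V4 Hd'; right; split => //; apply: sv_3; clrT; lra | nlra].
  +
    have Hbw : big (a (n (n tz))) by rewrite -flen_f fE Ha t3.
    set u := a (n (n r)).
    have Hfu : f u = r by rewrite fE /u Ha u3.
    have Hbu : big (a u) by rewrite /u Ha.
    have Hflu : flen u = flen q by rewrite -flen_f Hfu Hflr.
    have Hfffu : f (f (f u)) = n (n tz) by rewrite Hfu Hfr -Hnntz.
    have := iterf_len u; rewrite Hflu.
    have Hq3 := flen_ge3 q.
    case Eq: (flen q) Hq6 Hq3 => [|[|[|[|[|[|k]]]]]] //= _ _.
    * rewrite Hfffu => Hu.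
      right; rewrite /= Hfa3 -Hnnr [f (n (n r))]fE -/u -Hu t3 Htz //.
    * rewrite Hfffu => Hw.
      have Hw6 : flen (n (n tz)) <= 6 by rewrite Hnntz flen_f Eq.
      by have := L1 Hw6 Hbw; rewrite Hw Hbu.
    * rewrite Hfffu => Hw.
      have Hw5 : 4 < flen (n (n tz)) by rewrite Hnntz flen_f Eq.
      have Hw6 : flen (n (n tz)) <= 6 by rewrite Hnntz flen_f Eq.
      by case: (L2 Hw5 Hw6 Hbw); rewrite Hw.
  +
    have Hr3 : flen r = 3 by rewrite Hflr.
    have Hffq : f (f q) = r by rewrite -Hfr tri_f.
    have Hw : a (n (n tz)) = n (n (n r)).
      by apply: Hn; rewrite -fE Hnntz Hffq u4c.
    have : flen (a (n (n tz))) = flen tz by rewrite -flen_f fE Ha t3.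
    by rewrite Hw u4b => H3; move: Hbtz; rewrite -H3.
  +
    have Hr3 : flen r = 3 by rewrite Hflr.
    have Hffq : f (f q) = r by rewrite -Hfr tri_f.
    have Hw : a (n (n tz)) = n (n r).
      by apply: Hn; rewrite -fE Hnntz Hffq u3.
    have : flen (a (n (n tz))) = 3 by rewrite -flen_f fE Ha t4b.
    by rewrite Hw => H3; move: Hbnnr; rewrite H3.
  +
    have Hr3 : flen r = 3 by rewrite Hflr.
    have Hffq : f (f q) = r by rewrite -Hfr tri_f.
    have Hw : a (n (n tz)) = n (n (n r)).
      by apply: Hn; rewrite -fE Hnntz Hffq u4c.
    set b0 := a (n (n (n tz))).
    have Hfb0 : f b0 = tz by rewrite fE /b0 Ha t4c.
    have Hbb0 : big b0 by rewrite -flen_f Hfb0.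
    have Hnb0 : n b0 = f (n (n (n tz))) by rewrite fE.
    have Hfnb0 : flen (n b0) = 3 by rewrite Hnb0 flen_f.
    have Hfw : f (a (n (n tz))) = n (n (n tz)) by rewrite fE Ha.
    have Hw3 : flen (a (n (n tz))) = 3 by rewrite -flen_f Hfw.
    have Htw := tri_f Hw3; rewrite Hfw -Hnb0 Hw in Htw.
    have Hanb0 : a (n b0) = n (n r) by apply: Hn; rewrite -fE Htw.
    have Hnnb0 : n (n b0) = f (n (n r)) by rewrite fE -Hanb0 Ha.
    apply: False_ind; apply: (BTB Hbb0 Hfnb0).
    by rewrite Hnnb0 flen_f.
Qed.


Definition Qd e := [/\ flen e = 4, big (a e) & big (a (f (f e)))].

Lemma Qstep e : Qd e -> [/\ Qd (n (n (a e))), f (a (n (n (a e)))) = a e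
   & a (f (f (n (n (a e))))) = f (a (f (f e)))].
Proof.
case=> H1 H2 H3; have [_ H4 H5 H6] := Step H1 H2 H3.
split => //; split => //; last by rewrite H6 flen_f.
by rewrite -flen_f H5.
Qed.

Lemma Rall c c' : Qd (a c) -> fconnect f c' (a (f (f (a c)))) ->
  forall x, fconnect f c x -> Qd (a x) /\ fconnect f c' (a (f (f (a x)))).
Proof.
move=> H1 H2 x; rewrite -(same_fconnect_finv f_inj) => /connectP [p Hp ->] {x}.
elim: p c H1 H2 Hp => [|y p IH] c H1 H2 //= /andP [/eqP Hy Hp].
subst y.
have [Hq Hf Hz] := Qstep H1.
rewrite Ha in Hq Hf Hz.
have Ez : finv f c = a (n (n c)) by rewrite -{1}Hf (finv_f f_inj).
apply: IH Hp; first by rewrite Ez Ha.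
by rewrite Ez Ha Hz; apply: connect_trans H2 _; apply: fconnect1.
Qed.

Lemma Vfacts x : Qd (a x) -> [/\ deg x = 3, n (n (n x)) = x, flen (n x) = 4 & flen (n (n x)) = 4].
Proof.
move=> HQ; have [H1 H2 H3] := HQ; have [Hd Hz _ _] := Step H1 H2 H3.
rewrite Ha in Hd Hz; split => //.
- by rewrite -[RHS](iter_deg x) Hd.
- by have := H1; rewrite -flen_f fE Ha.
Qed.

Lemma orb3 u y : fconnect n u y -> deg u = 3 -> [\/ y = u, y = n u | y = n (n u)].
Proof.
move=> Hc Hd; have Hi := findex_max Hc; have Hy := iter_findex Hc.
rewrite -/(deg u) Hd in Hi.
move: Hi Hy; case: (findex n u y) => [|[|[|]]] //= _ <-.
- by apply: Or31.
- by apply: Or32.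
- by apply: Or33.
Qed.

Lemma order_a x : order a x = 2.
Proof.
have H1 : order a x <= 2 by apply: order_le_iter => //=; rewrite !Ha.
have H0 := order_gt0 a x.
case E: (order a x == 1); last by move: H1 H0 E; clear; lia.
have := iter_order a_inj x; rewrite (eqP E) /= => Hx.
by move: (Ha0 x); rewrite Hx eqxx.
Qed.


Lemma prism_contra e0 : map_connected a n -> genus0 a n ->
  (forall N, ~ is_prism a n N) -> Qd e0 -> False.
Proof.
move=> Hconn Hgen Hnp HQ.
set c1 := a e0. set c2 := a (f (f e0)).
have [Q1 Q2 Q3] := HQ.
have HA : forall x, fconnect f c1 x -> Qd (a x) /\ fconnect f c2 (a (f (f (a x)))).
  by apply: Rall; rewrite /c1 Ha.
have HB : forall x, fconnect f c2 x -> Qd (a x) /\ fconnect f c1 (a (f (f (a x)))).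
  apply: Rall; rewrite /c2 Ha ?quad_f //.
  by split; rewrite ?flen_f ?quad_f.
set U := [pred x | fconnect f c1 x || fconnect f c2 x].
have Ubig : forall x, x \in U -> big x.
  by move=> x; rewrite inE => /orP [] /flen_conn <-.
have HU : forall x, x \in U -> Qd (a x) /\ a (f (f (a x))) \in U.
  move=> x; rewrite inE => /orP [/HA [H1 H2] | /HB [H1 H2]]; split => //;
  by rewrite inE H2 ?orbT.
have Uclf : forall x y, fconnect f x y -> x \in U -> y \in U.
  move=> x y Hxy; rewrite !inE => /orP [] H.
    by rewrite (connect_trans H Hxy).
  by rewrite (connect_trans H Hxy) orbT.
have UV : forall x, x \in U -> [/\ deg x = 3, n (n (n x)) = x, n x \notin U & n (n x) \notin U].
  move=> x Hx; have [HQx _] := HU x Hx; have [H1 H2 H3 H4] := Vfacts HQx.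
  by split => //; apply/negP => /Ubig; rewrite ?H3 ?H4.
have Vst : forall x y, (exists2 u, u \in U & fconnect n u x) ->
    (y == a x) || (y == n x) -> exists2 u, u \in U & fconnect n u y.
  move=> x y [u Hu Hux] /orP [/eqP -> | /eqP ->]; last first.
    by exists u => //; apply: connect_trans Hux (fconnect1 _ _).
  have [Hd _ _ _] := UV u Hu.
  case: (orb3 Hux Hd) => ->.
  - exists (f u); first by apply: (Uclf u) => //; apply: fconnect1.
    by rewrite n_sym fE; apply: fconnect1.
  - exists (f (a (f (f (a u))))).
      by apply: (Uclf (a (f (f (a u))))); [apply: fconnect1 | case: (HU u Hu)].
    rewrite n_sym; have -> : n u = f (a u) by rewrite fE Ha.
    apply: connect_trans (fconnect1 _ _) _.
    rewrite faE; apply: fconnect1.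
  - exists (a (n (n u))); last by [].
    apply: (Uclf u) => //.
    have [_ Hf _] := Qstep (proj1 (HU u Hu)); rewrite Ha in Hf.
    by rewrite (fconnect_sym f_inj) -{2}Hf; apply: fconnect1.
have Vall : forall y, exists2 u, u \in U & fconnect n u y.
  move=> y; have := Hconn c1 y; case/connectP => p Hp ->.
  have V0 : exists2 u, u \in U & fconnect n u c1 by exists c1; rewrite // inE connect0.
  move: V0; elim: p (c1) Hp => [|z p IH] x0 //= /andP [Hz Hp] V0.
  exact: (IH z Hp (Vst _ _ V0 Hz)).
have D3 : forall y, deg y = 3.
  by move=> y; have [u Hu Huy] := Vall y; rewrite -(deg_conn Huy); case: (UV u Hu).
have C1 : forall y, y \notin U -> flen y = 4.
  move=> y Hy; have [u Hu Huy] := Vall y; have [HQu _] := HU u Hu.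
  have [Hd _ H3 H4] := Vfacts HQu.
  by case: (orb3 Huy Hd) => Ey; rewrite Ey // -Ey; move: Hy; rewrite Ey Hu.
have C2 : forall u u', u \in U -> u' \in U -> fconnect n u u' -> u = u'.
  move=> u u' Hu Hu' Huu; have [Hd _ H3 H4] := UV u Hu.
  by case: (orb3 Huu Hd) => E //; rewrite E in Hu'; [rewrite Hu' in H3 | rewrite Hu' in H4].
have Hsymn := fconnect_sym Hn.
have Hnv : nvert n = #|U|.
  have -> : #|U| = #|[set froot n x | x in U]|.
    by rewrite card_in_imset // => u u' Hu Hu' /(fingraph.rootP Hsymn) H; apply: C2.
  rewrite /nvert /n_comp_mem; apply: eq_card => x; rewrite !inE andbT.
  apply/idP/imsetP.
    move=> Hr; have [u Hu Huy] := Vall x; exists u => //.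
    by rewrite -(eqP Hr); apply/esym/(fingraph.rootP Hsymn).
  by case=> u Hu ->; exact: roots_root Hsymn u.
have Hne : nedge a * 2 = #|T|.
  rewrite /nedge (fcard_order_set a_inj) //.
  by apply/subsetP => x _; rewrite inE order_a.
have Hnv3 : nvert n * 3 = #|T|.
  rewrite /nvert (fcard_order_set Hn) //.
  by apply/subsetP => x _; rewrite inE; have := D3 x; rewrite /Defs.deg => ->.
have Hclf : fclosed f U.
  by move=> x y /eqP <-; rewrite !inE -!(same_fconnect1_r f_inj).
have Hfc : fcard f [predC U] * 4 = #|[predC U]|.
  apply: (fcard_order_set f_inj); last exact: predC_closed.
  by apply/subsetP => x; rewrite !inE => Hx; rewrite -/(flen x) C1.
have Hnf : nface a n = fcard f U + fcard f [predC U].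
  by rewrite /nface -n_compC; apply: eq_n_comp_r.
have HC := cardC U.
have HcU : fcard f U = 2.
  have E1 : #|U| + #|[predC U]| = #|T| := HC.
  have E2 : fcard f [predC U] * 4 = #|[predC U]| := Hfc.
  move: Hgen; rewrite /genus0; move: Hnv Hne Hnv3 Hnf E1 E2; clear.
  set D := #|T|; set u := #|U|; set cC := #|[predC U]|. lia.
have Hdis : ~~ fconnect f c1 c2.
  apply/negP => H12.
  have : fcard f U = 1.
    rewrite -(n_comp_connect (fconnect_sym f_inj) c1); apply: eq_n_comp_r => x.
    rewrite !inE; case E: (fconnect f c1 x) => //=.
    by apply/negP => H2; rewrite (connect_trans H12 H2) in E.
  by rewrite HcU.
have Hdisj : forall x, fconnect f c1 x -> fconnect f c2 x -> False.
  move=> x H1 H2; move/negP: Hdis; apply.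
  by apply: connect_trans H1 _; rewrite (fconnect_sym f_inj).
have HU2 : #|U| = flen c1 + flen c2.
  rewrite /Defs.flen /order -cardUI.
  rewrite (@eq_card0 _ [predI _ & _]); last by move=> x; rewrite !inE; apply/negP => /andP [/Hdisj H /H].
  by rewrite addn0; apply: eq_card => x; rewrite !inE.
set phi := fun x => a (f (f (a x))).
have phi_inj : injective phi.
  by move=> x y /a_inj /f_inj /f_inj /a_inj.
have Hle : forall d1 d2, (forall x, fconnect f d1 x -> fconnect f d2 (phi x)) -> flen d1 <= flen d2.
  move=> d1 d2 H; rewrite /Defs.flen /order -(card_imset _ phi_inj).
  apply: subset_leq_card; apply/subsetP => y /imsetP [x Hx ->]; rewrite inE; apply: H.
  by rewrite inE in Hx.
have Hlen : flen c1 = flen c2.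
  apply/eqP; rewrite eqn_leq; apply/andP; split; apply: Hle => x.
    by case/HA.
  by case/HB.
apply: (Hnp (flen c1)); split.
- by apply: leq_trans Q2.
- by rewrite Hnv HU2 Hlen; lia.
- have E1 : #|U| + #|[predC U]| = #|T| := HC.
  have E2 : fcard f [predC U] * 4 = #|[predC U]| := Hfc.
  move: HcU Hnf E2 Hnv Hnv3 HU2 Hlen E1; clear.
  set D := #|T|; set u := #|U|; set cC := #|[predC U]|. lia.
exists c1, c2; split => //.
- move=> d H1 H2; apply: C1; rewrite inE; apply/norP; split; by [].
- move=> v; split; first exact: D3.
  have [u Hu Huv] := Vall v.
  rewrite /ncorners.
  have := cardUI [pred d | fconnect n v d & fconnect f c1 d] [pred d | fconnect n v d & fconnect f c2 d].
  rewrite (@eq_card0 _ [predI _ & _]); last first.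
    by move=> x; rewrite !inE; apply/negP => /andP [/andP [_ /Hdisj H] /andP [_ /H]].
  rewrite (@eq_card1 _ u [predU _ & _]) // => x; rewrite !inE.
  apply/idP/eqP.
    move=> Hx; apply/esym/C2 => //.
      by move: Hx => /orP [] /andP [_ H]; rewrite inE H ?orbT.
    by apply: connect_trans Huv _; move: Hx => /orP [] /andP [H _].
  move=> ->; rewrite (n_sym v u) Huv /=; move: Hu; by rewrite inE.
Qed.


Lemma core e0 e1 : map_connected a n -> genus0 a n -> (forall N, ~ is_prism a n N) ->
  flen e0 <= 6 -> big (a e0) -> big (a e1) -> fconnect f e0 e1 -> e1 = e0.
Proof.
move=> Hconn Hgen Hnp H6 Hb0 Hb1 Hc.
have Hj := findex_max Hc; have Hi := iter_findex Hc.
have Hper := iterf_len e0.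
have Hf1 : flen e1 = flen e0 by symmetry; apply: flen_conn.
have Hg3 := flen_ge3 e0.
have L1e0 := L1 H6 Hb0.
have H6' : flen e1 <= 6 by rewrite Hf1.
have L1e1 := L1 H6' Hb1.
have Hj' : findex f e0 e1 < flen e0 := Hj.
move: Hj' Hi Hper; clear Hj.
move: (findex f e0 e1) => j; move Ek: (flen e0) => K Hj Hi Hper.
rewrite Ek in H6 Hf1 Hg3.
have Hs : forall m, j + m = K -> iter m f e1 = e0.
  by move=> m Hm; rewrite -Hi -iterD addnC Hm.
have [Hj00|Hj0] := eqVneq j 0; first by rewrite -Hi Hj00.
have [Hj1|Hj1] := eqVneq j 1.
  have E : f e0 = e1 by rewrite -Hi Hj1.
  by move: L1e0; rewrite E Hb1.
have [Hk1|Hk1] := eqVneq (j + 1) K.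
  by move: L1e1; rewrite -[f e1]/(iter 1 f e1) Hs // Hb0.
have [Hj2|Hj2] := eqVneq j 2.
  have E2 : f (f e0) = e1 by rewrite -Hi Hj2.
  have Hb2 : big (a (f (f e0))) by rewrite E2.
  have [HK4|HK4] := eqVneq K 4.
    apply: False_ind; apply: (prism_contra Hconn Hgen Hnp (e0 := e0)).
    by split; rewrite ?Ek.
  have Hf5 : 4 < flen e0 by rewrite Ek; lia.
  have H6'' : flen e0 <= 6 by rewrite Ek.
  by case: (L2 Hf5 H6'' Hb0 Hb2).
have [Hk2|Hk2] := eqVneq (j + 2) K.
  have Hf5 : 4 < flen e1 by rewrite Hf1; lia.
  have Hb2 : big (a (f (f e1))) by rewrite -[f (f e1)]/(iter 2 f e1) Hs.
  by case: (L2 Hf5 H6' Hb1 Hb2).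
have Hj3 : j = 3 /\ K = 6 by lia.
case: Hj3 => Hj3 HK6.
have He1 : f (f (f e0)) = e1 by rewrite -Hi Hj3.
have Hb3 : big (a (f (f (f e0)))) by rewrite He1.
have HK0 : flen e0 = 6 by rewrite Ek.
have HK1 : flen e1 = 6 by rewrite Hf1.
have Hs3 : f (f (f e1)) = e0 by rewrite -[f (f (f e1))]/(iter 3 f e1) Hs // Hj3 HK6.
have Hb3' : big (a (f (f (f e1)))) by rewrite Hs3.
have [i1 Hi1 Hr1] : exists2 i, i <= 4 & iter i f (a e1) = a e0.
  case: (Hex6 HK0 Hb0 Hb3); rewrite He1 => H; [exists 3 | exists 4] => //.
have [i2 Hi2 Hr2] : exists2 i, i <= 4 & iter i f (a e0) = a e1.
  case: (Hex6 HK1 Hb1 Hb3'); rewrite Hs3 => H; [exists 3 | exists 4] => //.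
have Hit : iter (i1 + i2) f (a e0) = a e0 by rewrite iterD Hr2 Hr1.
case: i2 Hi2 Hr2 Hit => [|i2] Hi2 Hr2 Hit.
  by move: Hr2 => /= /a_inj ->.
have Hpos : 0 < i1 + i2.+1 by rewrite addnS.
have := order_le_iter Hpos Hit; rewrite -/(flen (a e0)) => Hle.
by move: Hb0 Hle Hi1 Hi2; clear; lia.
Qed.


Lemma pick_e x k s : big s -> flen k <= 6 -> edge_on_face a n x k -> edge_on_face a n x s ->
  exists e, [/\ fconnect a x e, fconnect f k e & fconnect f s (a e)].
Proof.
move=> Hs Hk /orP [Hxk | Hxk] /orP [Hxs | Hxs].
- by have := flen_conn Hxk; have := flen_conn Hxs; lia.
- by exists x; split.
- by exists (a x); split; [apply: fconnect1 | | rewrite Ha].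
- by have := flen_conn Hxk; have := flen_conn Hxs; lia.
Qed.

Lemma main_sec s s' k d d' : map_connected a n -> genus0 a n -> (forall N, ~ is_prism a n N) ->
  big s -> big s' -> flen k <= 6 -> edge_on_face a n d k -> edge_on_face a n d s ->
  edge_on_face a n d' k -> edge_on_face a n d' s' -> fconnect f s s' /\ fconnect a d d'.
Proof.
move=> Hc Hg Hp Hs Hs' Hk H1 H2 H3 H4.
have [e0 [A0 K0 S0]] := pick_e Hs Hk H1 H2.
have [e1 [A1 K1 S1]] := pick_e Hs' Hk H3 H4.
have Hf0 : flen e0 <= 6 by rewrite -(flen_conn K0).
have Hb0 : big (a e0) by rewrite -(flen_conn S0).
have Hb1 : big (a e1) by rewrite -(flen_conn S1).
have Hc01 : fconnect f e0 e1 by apply: connect_trans K1; rewrite (fconnect_sym f_inj).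
have E := core Hc Hg Hp Hf0 Hb0 Hb1 Hc01.
split.
- by apply: connect_trans S0 _; rewrite (fconnect_sym f_inj) -E.
- by apply: connect_trans A0 _; rewrite (fconnect_sym a_inj) -E.
Qed.

End Map.

Theorem lemma2p5 (T : finType) (a n : T -> T) (s s' k d d' : T) :
  planar_PCC a n ->
  (20 <= flen a n s)%N -> (20 <= flen a n s')%N -> (flen a n k <= 6)%N ->
  edge_on_face a n d k -> edge_on_face a n d s ->
  edge_on_face a n d' k -> edge_on_face a n d' s' ->
  fconnect (fperm a n) s s' /\ fconnect a d d'.
Proof.
move=> [[[Hn Ha Ha0] Hconn Hgen [Hloop Hmult]] [Hcurv Hdeg Hnp]].
apply: (main_sec Hn Ha Ha0 Hloop Hmult Hcurv Hdeg Hconn Hgen).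
by move=> N; case: (Hnp N).
Qed.
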